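(* Let $n\ge 1$, $m=2$. There is a learning algorithm that exactly identifies every (complete or incomplete) acyclic $1$-bounded (tree) CP-net $N^*$ over $n$ binary variables using at most $4n+2e_{N^*}\log_2(n)$ membership queries over swap examples in $\overline{\mathcal{X}}_{swap}$, where $e_{N^*}$ is the number of edges of $N^*$.
   Context: Variables $V=\{v_1,\dots,v_n\}$, each with a domain of size $2$. An outcome assigns a value to every variable; $\mathcal{O}_X$ denotes assignments to $X\subseteq V$. A CP-net specifies for each $v_i$ a parent set $Pa(v_i)\subseteq V\setminus\{v_i\}$ and, for each context $\gamma\in\mathcal{O}_{Pa(v_i)}$, either a strict order $\succ^{v_i}_\gamma$ on $D_{v_i}$ or nothing (complete if an order is always given, otherwise incomplete); parents are non-dummy. The graph has edges $(v_j,v_i)$ for $v_j\in Pa(v_i)$; tree CP-net: acyclic and each variable has at most one parent. Improving flip: changing only $v_i$ to a value preferred under $\succ^{v_i}_{o[Pa(v_i)]}$ (when given); $o'\succ o$ iff a nonempty sequence of improving flips leads from $o$ to $o'$. $\overline{\mathcal{X}}_{swap}$ is the set of all ordered pairs $x=(x.1,x.2)$ of outcomes differing in exactly one variable. A membership query for $x\in\overline{\mathcal{X}}_{swap}$ returns $1$ iff $x.1\succ x.2$ under the unknown target $N^*$, else $0$ (answers always correct). Exact identification means outputting a CP-net inducing the same concept over $\overline{\mathcal{X}}_{swap}$ as $N^*$. *)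

(* Defs.v *)
From mathcomp Require Import all_boot.
From Stdlib Require Import Reals Relations.
Set Implicit Arguments. Unset Strict Implicit. Unset Printing Implicit Defensive.

(* Variables v_1..v_n are indexed by 'I_n; each domain is {false,true}. *)
Definition outcome (n : nat) := {ffun 'I_n -> bool}.

(* A (general) CP-net over n binary variables.
   pa i   : parent set of variable i.
   cpt i o: the preference on D_{v_i} in context o[Pa(v_i)] :
            Some b  = the strict order  b > ~~b  is given,
            None    = no order given (incomplete CP-net).
   cpt i is required to depend only on the parents' values. *)
Record cpnet (n : nat) := CPNet {
  pa : 'I_n -> {set 'I_n};
  cpt : 'I_n -> outcome n -> option bool;
  pa_irrefl : forall i, i \notin pa i;
  cpt_local : forall i (o o' : outcome n),
      (forall j, j \in pa i -> o j = o' j) -> cpt i o = cpt i o';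
  pa_nondummy : forall i j, j \in pa i ->
      exists o o' : outcome n,
        (forall k, k != j -> o k = o' k) /\ cpt i o <> cpt i o'
}.

Definition cp_edge n (N : cpnet n) : rel 'I_n := fun a b => a \in pa N b.

Definition acyclic n (N : cpnet n) : Prop :=
  forall i j, cp_edge N j i -> ~~ connect (cp_edge N) i j.

Definition tree_cpnet n (N : cpnet n) : Prop :=
  acyclic N /\ forall i, #|pa N i| <= 1.

Definition nedges n (N : cpnet n) : nat := \sum_(i < n) #|pa N i|.

Definition improving_flip n (N : cpnet n) (o o' : outcome n) : Prop :=
  exists i : 'I_n, (forall k, k != i -> o' k = o k) /\ o' i != o i /\
                   cpt N i o = Some (o' i).

Definition prefers n (N : cpnet n) (o' o : outcome n) : Prop :=
  clos_trans _ (improving_flip N) o o'.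

Definition is_swap n (x : outcome n * outcome n) : bool :=
  #|[set i | x.1 i != x.2 i]| == 1.

Definition swap_ex n := {x : outcome n * outcome n | is_swap x}.

(* Concept of N over swap examples: x |-> [x.1 > x.2]. *)
Definition same_concept n (N1 N2 : cpnet n) : Prop :=
  forall x : swap_ex n, prefers N1 (val x).1 (val x).2 <-> prefers N2 (val x).1 (val x).2.

(* A deterministic, adaptive learning algorithm asking membership queries on
   swap examples, modelled as a (finite) decision tree: at an inner node it
   asks a query and branches on the 0/1 answer; at a leaf it outputs a CP-net. *)
Inductive learner (n : nat) :=
  | Output : cpnet n -> learner n
  | Ask : swap_ex n -> (bool -> learner n) -> learner n.

Fixpoint run n (L : learner n) (ans : swap_ex n -> bool) : cpnet n * nat :=
  match L with
  | Output N => (N, 0)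
  | Ask x k => let r := run (k (ans x)) ans in (r.1, r.2.+1)
  end.

Definition mq_oracle n (N : cpnet n) (ans : swap_ex n -> bool) : Prop :=
  forall x : swap_ex n, ans x = true <-> prefers N (val x).1 (val x).2.

Definition log2 (x : R) : R := (ln x / ln 2)%R.

(* Main.v *)
Require Import Defs.
From mathcomp Require Import all_boot.
From Stdlib Require Import Reals Relations Lra.
Set Implicit Arguments. Unset Strict Implicit. Unset Printing Implicit Defensive.

Definition flip_at n (N : cpnet n) (v : 'I_n) (o o' : outcome n) : Prop :=
  (forall k, k != v -> o' k = o k) /\ o' v != o v /\ cpt N v o = Some (o' v).

Inductive fseq n (N : cpnet n) : outcome n -> outcome n -> seq 'I_n -> Prop :=
| fs1 o o' v : flip_at N v o o' -> fseq N o o' [:: v]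
| fsS o o1 o' v vs : flip_at N v o o1 -> fseq N o1 o' vs -> fseq N o o' (v :: vs).

Lemma ct_fseq n (N : cpnet n) o o' : prefers N o' o -> exists vs, fseq N o o' vs.
Proof.
rewrite /prefers => H; apply clos_trans_t1n in H; elim: H => [x y [v Hv]|x y z [v Hv] _ [vs IH]].
  by exists [:: v]; apply: fs1.
by exists (v :: vs); apply: fsS Hv IH.
Qed.

Lemma fseq_notin n (N : cpnet n) o o' vs k : fseq N o o' vs -> k \notin vs -> o' k = o k.
Proof.
elim=> [x y v [H _]|x y z v ws [H _] _ IH]; rewrite ?inE => Hk.
  exact: H.
move: Hk; rewrite negb_or => /andP[Hk1 Hk2].
by rewrite IH // H.
Qed.

Lemma fseq_min n (N : cpnet n) o o' vs v :
  fseq N o o' vs -> (forall j, j \in pa N v -> j \notin vs) -> v \in vs ->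
  cpt N v o = Some (o' v) /\ o v != o' v.
Proof.
elim=> [x y u [H1 [H2 H3]]|x y z u ws [H1 [H2 H3]] Hf IH] Hp.
  by rewrite inE => /eqP ->; split=> //; rewrite eq_sym.
have Hc : cpt N v x = cpt N v y.
  apply: cpt_local => j Hj; rewrite H1 //; apply/eqP => E; subst j.
  by move: (Hp u Hj); rewrite inE eqxx.
have Hp' : forall j, j \in pa N v -> j \notin ws.
  by move=> j /Hp; rewrite inE negb_or => /andP[].
rewrite inE; case: (eqVneq v u) => [E|Hne] /= Hin.
  subst u; case Hw: (v \in ws).
    have [IH1 IH2] := IH Hp' Hw.
    by move: IH1; rewrite -Hc H3 => -[E]; rewrite E eqxx in IH2.
  have E := fseq_notin Hf (negbT Hw).
  by rewrite E H3; split=> //; rewrite eq_sym.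
have [IH1 IH2] := IH Hp' Hin.
by rewrite Hc IH1 -H1.
Qed.

Definition anc n (N : cpnet n) v := #|[set w | connect (cp_edge N) w v]|.

Lemma anc_lt n (N : cpnet n) v j : acyclic N -> j \in pa N v -> anc N j < anc N v.
Proof.
move=> Hac Hj; apply: proper_card; apply/properP; split.
  apply/subsetP => w; rewrite !inE => Hw; apply: connect_trans Hw _.
  by apply: connect1.
exists v; rewrite !inE ?connect0 //; exact: Hac.
Qed.

Lemma exists_min n (N : cpnet n) (vs : seq 'I_n) v : acyclic N -> v \in vs ->
  exists u, u \in vs /\ forall j, j \in pa N u -> j \notin vs.
Proof.
move=> Hac; move: {2}(anc N v) (leqnn (anc N v)) => m; elim: m v => [|m IH] v Hm Hv.
  case: (boolP [exists j in pa N v, j \in vs]).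
    by case/exists_inP => j Hj _; move: (anc_lt Hac Hj); rewrite ltnNge (leq_trans Hm).
  move/exists_inPn => H; by exists v.
case: (boolP [exists j in pa N v, j \in vs]).
  case/exists_inP => j Hj Hjv; apply: (IH j) => //.
  by rewrite -ltnS (leq_trans (anc_lt Hac Hj)).
move/exists_inPn => H; by exists v.
Qed.

Definition setv n (o : outcome n) (i : 'I_n) (c : bool) : outcome n :=
  [ffun v => if v == i then c else o v].

Lemma swap_lemma n (N : cpnet n) o i c : acyclic N ->
  (prefers N (setv o i c) (setv o i (~~ c)) <-> cpt N i o = Some c).
Proof.
move=> Hac.
have Hloc : forall d, cpt N i (setv o i d) = cpt N i o.
  move=> d; apply: cpt_local => j Hj; rewrite ffunE; case: eqP => // E; subst j.
  by move: (pa_irrefl N i); rewrite Hj.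
split.
  case/ct_fseq => vs Hf.
  have Hne : vs != [::] by case: Hf.
  case: vs Hne Hf => [//|v0 vs] _ Hf.
  have [u [Hu Hmin]] := exists_min (v := v0) Hac (mem_head v0 vs).
  have [H1 H2] := fseq_min Hf Hmin Hu.
  move: H2; rewrite !ffunE; case: (eqVneq u i) => [E|_]; last by rewrite eqxx.
  subst u; rewrite Hloc in H1; by rewrite H1 ffunE eqxx.
move=> H; apply: t_step; exists i; rewrite !ffunE eqxx; split; last split.
- by move=> k Hk; rewrite !ffunE (negbTE Hk).
- by case: c {H}.
- by rewrite Hloc.
Qed.


Inductive prog (n : nat) (A : Type) : Type :=
| PRet : A -> prog n A
| PAsk : swap_ex n -> (bool -> prog n A) -> prog n A.
Arguments PRet {n A}.

Fixpoint pbind n A B (p : prog n A) (f : A -> prog n B) : prog n B :=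
  match p with PRet a => f a | PAsk x k => PAsk x (fun b => pbind (k b) f) end.

Fixpoint prun n A (p : prog n A) (ans : swap_ex n -> bool) : A * nat :=
  match p with PRet a => (a, 0) | PAsk x k => let r := prun (k (ans x)) ans in (r.1, r.2.+1) end.

Fixpoint tolearner n (p : prog n (cpnet n)) : learner n :=
  match p with PRet N => Output N | PAsk x k => Ask x (fun b => tolearner (k b)) end.

Lemma run_tolearner n (p : prog n (cpnet n)) ans : run (tolearner p) ans = prun p ans.
Proof. by elim: p => //= x k IH; rewrite IH. Qed.

Lemma prun_bind n A B (p : prog n A) (f : A -> prog n B) ans :
  prun (pbind p f) ans = ((prun (f (prun p ans).1) ans).1,
                          (prun p ans).2 + (prun (f (prun p ans).1) ans).2).
Proof. elim: p => [a|x k IH] /=; first by case: (prun (f a) ans). by rewrite IH. Qed.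

Definition ask n (x : swap_ex n) : prog n bool := PAsk x (fun b => PRet b).

Fixpoint pmapM n X A (xs : seq X) (f : X -> prog n A) : prog n (seq A) :=
  match xs with
  | [::] => PRet [::]
  | x :: xs => pbind (f x) (fun a => pbind (pmapM xs f) (fun r => PRet (a :: r)))
  end.

Lemma prun_pmapM n X A (xs : seq X) (f : X -> prog n A) ans :
  prun (pmapM xs f) ans = ([seq (prun (f x) ans).1 | x <- xs],
                           \sum_(x <- xs) (prun (f x) ans).2).
Proof.
elim: xs => [|x xs IH] /=; first by rewrite big_nil.
by rewrite !prun_bind /= IH big_cons /= addn0.
Qed.

Lemma mkq_proof n (o : outcome n) i c : is_swap (setv o i c, setv o i (~~ c)).
Proof.
apply/eqP; rewrite (_ : [set _ | _] = [set i]) ?cards1 //.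
apply/setP => v; rewrite !inE !ffunE /=; case: (eqVneq v i) => //.
  by case: c. by rewrite eqxx.
Qed.

Definition mkq n (o : outcome n) i c : swap_ex n := exist (fun x => is_swap x) (setv o i c, setv o i (~~ c)) (mkq_proof o i c).

Definition cvalP n (o : outcome n) i : prog n (option bool) :=
  pbind (ask (mkq o i true)) (fun a1 => pbind (ask (mkq o i false)) (fun a2 =>
    PRet (if a1 then Some true else if a2 then Some false else None))).

Definition ob n (b : nat) : outcome n := [ffun v : 'I_n => odd (v %/ expn 2 b)].
Definition o0 n : outcome n := [ffun _ => false].
Definition o1 n : outcome n := [ffun _ => true].

Definition tsel (c0 c1 : option bool) : bool := (c0 == Some true) != (c1 == Some true).

Definition decode (bs : seq bool) : nat := foldr (fun (a : bool) acc => (a : nat) + acc.*2) 0 bs.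

Definition kbits n := (trunc_log 2 n).+1.

Definition learn_var n (i : 'I_n) : prog n (option bool * option bool * 'I_n) :=
  pbind (cvalP (o0 n) i) (fun c0 => pbind (cvalP (o1 n) i) (fun c1 =>
   if c0 == c1 then PRet (c0, c1, i) else
   pbind (pmapM (iota 0 (kbits n)) (fun b => ask (mkq (ob n b) i (tsel c0 c1))))
     (fun as_ => PRet (c0, c1,
        insubd i (decode [seq a == (c1 == Some (tsel c0 c1)) | a <- as_]))))).

Definition condb n (i : 'I_n) (d : option bool * option bool * 'I_n) :=
  (d.1.1 != d.1.2) && (d.2 != i).

Definition bpa n (D : 'I_n -> option bool * option bool * 'I_n) (i : 'I_n) : {set 'I_n} :=
  if condb i (D i) then [set (D i).2] else set0.
Definition bcpt n (D : 'I_n -> option bool * option bool * 'I_n) (i : 'I_n) (o : outcome n) :=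
  if condb i (D i) then (if o (D i).2 then (D i).1.2 else (D i).1.1) else (D i).1.1.

Lemma bpa_irrefl n D (i : 'I_n) : i \notin bpa D i.
Proof. rewrite /bpa /condb; case: ifP => [/andP[_ H]|_]; by rewrite inE // eq_sym. Qed.

Lemma bcpt_local n D (i : 'I_n) (o o' : outcome n) :
  (forall j, j \in bpa D i -> o j = o' j) -> bcpt D i o = bcpt D i o'.
Proof.
rewrite /bpa /bcpt; case: ifP => // _ H; by rewrite H // inE.
Qed.

Lemma bpa_nondummy n D (i j : 'I_n) : j \in bpa D i ->
  exists o o' : outcome n, (forall k, k != j -> o k = o' k) /\ bcpt D i o <> bcpt D i o'.
Proof.
rewrite /bpa /bcpt; case: ifP => [Hc|_]; last by rewrite inE.
rewrite inE => /eqP ->.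
exists (o0 n), [ffun k => k == (D i).2]; split.
  by move=> k Hk; rewrite !ffunE (negbTE Hk).
rewrite !ffunE eqxx; move: Hc => /andP[/eqP H _] E; exact: H.
Qed.

Definition build n (D : 'I_n -> option bool * option bool * 'I_n) : cpnet n :=
  CPNet (@bpa_irrefl n D) (@bcpt_local n D) (@bpa_nondummy n D).

Definition theL n : learner n :=
  tolearner (pbind (pmapM (enum 'I_n) (@learn_var n))
    (fun ds => PRet (build (fun i => nth (None, None, i) ds i)))).


Lemma mq_ans n (N : cpnet n) ans o i c : acyclic N -> mq_oracle N ans ->
  ans (mkq o i c) = (cpt N i o == Some c).
Proof.
move=> Hac Hor; apply/idP/eqP.
  by move/(Hor (mkq o i c))/(swap_lemma _ _ _ Hac).
by move/(swap_lemma _ _ _ Hac)/(Hor (mkq o i c)).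
Qed.


Lemma cvalP_ok n (N : cpnet n) ans o i : acyclic N -> mq_oracle N ans ->
  prun (cvalP o i) ans = (cpt N i o, 2).
Proof.
move=> Hac Hor; rewrite /cvalP !prun_bind /= !(mq_ans _ _ _ Hac Hor).
by case: (cpt N i o) => [[]|].
Qed.

Lemma decodeK k j : j < expn 2 k -> decode [seq odd (j %/ expn 2 b) | b <- iota 0 k] = j.
Proof.
elim: k j => [|k IH] j Hj /=.
  by move: Hj; rewrite ltnS leqn0 => /eqP ->.
rewrite divn1 -(addn0 1) iotaDl -map_comp.
have -> : [seq ((fun b => odd (j %/ expn 2 b)) \o addn 1) b | b <- iota 0 k] = [seq odd ((j %/ 2) %/ expn 2 b) | b <- iota 0 k].
  apply: eq_map => b; change (odd (j %/ expn 2 (1 + b)) = odd ((j %/ 2) %/ expn 2 b)); by rewrite add1n expnS divnMA.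
rewrite IH; first by rewrite divn2 odd_double_half.
by rewrite ltn_divLR // mulnC -expnS.
Qed.

Lemma tsel_ok (c0 c1 : option bool) : c0 != c1 ->
  ((c0 == Some (tsel c0 c1)) == (c1 == Some (tsel c0 c1))) = false.
Proof. by case: c0 c1 => [[]|] [[]|]. Qed.

Lemma prun_tail n A (xs : seq nat) (q : nat -> swap_ex n) (g : seq bool -> A) ans :
  prun (pbind (pmapM xs (fun b => ask (q b))) (fun as_ => PRet (g as_))) ans =
  (g [seq ans (q b) | b <- xs], size xs).
Proof. by rewrite prun_bind prun_pmapM /= sum1_size addn0. Qed.

Definition val_of n (i : 'I_n) (d : option bool * option bool * 'I_n) (o : outcome n) :=
  if condb i d then (if o d.2 then d.1.2 else d.1.1) else d.1.1.

Lemma learn_var_ok n (N : cpnet n) ans i : tree_cpnet N -> mq_oracle N ans ->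
  (forall o, val_of i (prun (learn_var i) ans).1 o = cpt N i o) /\
  (prun (learn_var i) ans).2 = 4 + #|pa N i| * kbits n.
Proof.
move=> [Hac Htr] Hor; rewrite /learn_var prun_bind (cvalP_ok _ _ Hac Hor); cbv beta iota delta [fst snd]; rewrite prun_bind (cvalP_ok _ _ Hac Hor); cbv beta iota delta [fst snd]. 
set c0 := cpt N i (o0 n); set c1 := cpt N i (o1 n).
have := Htr i; rewrite leq_eqVlt ltnS leqn0; case/orP => Hc.
  move: (Hc) => /cards1P [j Hj].
  have cptE : forall o, cpt N i o = if o j then c1 else c0.
    move=> o; case E: (o j).
      by apply: cpt_local => k; rewrite Hj inE => /eqP ->; rewrite E ffunE.
    by apply: cpt_local => k; rewrite Hj inE => /eqP ->; rewrite E ffunE.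
  have Hne : c0 != c1.
    have [o [o' [H1 H2]]] := @pa_nondummy n N i j (ltac:(by rewrite Hj set11)).
    apply/eqP => E; apply: H2; rewrite !cptE E; by case: (o j); case: (o' j).
  set t := tsel c0 c1.
  have Hji : j != i by apply/eqP => E; move: (pa_irrefl N i); rewrite Hj E set11.
  have Hdec : decode [seq a == (c1 == Some t) | a <- [seq ans (mkq (ob n b) i t) | b <- iota 0 (kbits n)]] = j.
    rewrite -map_comp.
    have -> : [seq ((fun a => a == (c1 == Some t)) \o (fun b => ans (mkq (ob n b) i t))) b | b <- iota 0 (kbits n)]
      = [seq odd (j %/ expn 2 b) | b <- iota 0 (kbits n)].
      apply: eq_map => b /=; rewrite (mq_ans _ _ _ Hac Hor) cptE ffunE.
      case: (odd _); first by rewrite eqxx.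
      by rewrite tsel_ok.
    rewrite decodeK //.
    apply: leq_trans (ltn_ord j) _; apply: ltnW; exact: trunc_log_ltn.
  rewrite (negbTE Hne) prun_tail; cbv beta iota delta [fst snd].
  rewrite Hdec.
  have -> : insubd i j = j by apply: val_inj; rewrite /= insubdK //; exact: ltn_ord.
  split.
    by move=> o; rewrite /val_of /condb /= Hne Hji cptE.
  by rewrite (eqP Hc) size_iota mul1n.
have H0 := cards0_eq (eqP Hc).
have cptE : forall o, cpt N i o = c0.
  by move=> o; apply: cpt_local => k; rewrite H0 inE.
rewrite /c1 cptE eqxx (eqP Hc); split=> //.
by move=> o; rewrite /val_of /condb /= eqxx cptE.
Qed.


Lemma prefers_ext n (N1 N2 : cpnet n) : (forall i o, cpt N1 i o = cpt N2 i o) ->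
  forall a b, prefers N1 a b -> prefers N2 a b.
Proof.
move=> H a b; rewrite /prefers; elim=> [x y [i [H1 [H2 H3]]]|x y z _ IH1 _ IH2].
  by apply: t_step; exists i; rewrite -H.
exact: t_trans IH1 IH2.
Qed.

Lemma INR_expn2 t : INR (expn 2 t) = (2 ^ t)%R.
Proof. elim: t => [|t IH]; first by rewrite expn0. by rewrite expnS mult_INR IH /=. Qed.

Lemma log2_ge t m : (0 < m)%N -> (expn 2 t <= m)%N -> (INR t <= log2 (INR m))%R.
Proof.
move=> Hm Ht.
have l2 : (0 < ln 2)%R by rewrite -ln_1; apply: ln_increasing; lra.
have H : (INR t * ln 2 <= ln (INR m))%R.
  rewrite -ln_pow; last lra.
  rewrite -INR_expn2.
  have /le_INR Hle : (expn 2 t <= m)%coq_nat by apply/leP.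
  case: (Rle_lt_or_eq_dec _ _ Hle) => [Hlt|->]; last lra.
  apply: Rlt_le; apply: ln_increasing => //.
  rewrite INR_expn2; apply: pow_lt; lra.
rewrite /log2.
apply (Rmult_le_reg_r (ln 2)) => //.
by rewrite /Rdiv Rmult_assoc Rinv_l ?Rmult_1_r; lra.
Qed.

Lemma prun_ret n A (a : A) ans : prun (@PRet n A a) ans = (a, 0).
Proof. by []. Qed.

Unset Implicit Arguments.

Theorem theorem7 (n : nat) (hn : 1 <= n) :
  exists L : learner n,
    forall (Nstar : cpnet n) (ans : swap_ex n -> bool),
      tree_cpnet Nstar -> mq_oracle Nstar ans ->
      same_concept (run L ans).1 Nstar /\
      (INR (run L ans).2 <=
         INR (4 * n) + 2 * INR (nedges Nstar) * log2 (INR n))%R.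
Proof.
exists (theL n) => N ans Htree Hor.
have Hok := fun i => learn_var_ok i Htree Hor.
rewrite /theL run_tolearner prun_bind prun_pmapM prun_ret; cbv beta iota delta [fst snd].
set D := fun i : 'I_n => _.
have HD : forall i o, cpt (build D) i o = cpt N i o.
  move=> i o; rewrite -(proj1 (Hok i) o) /= /bcpt /D.
  by rewrite (nth_map i) ?size_enum_ord ?ltn_ord // nth_ord_enum.
split.
  move=> x; split; [exact: prefers_ext | apply: prefers_ext => i o; by rewrite HD].
have Hc : \sum_(x <- enum 'I_n) (let (_, y) := prun (learn_var x) ans in y) + 0
          = 4 * n + nedges N * kbits n.
  transitivity (\sum_(i in 'I_n) (4 + #|pa N i| * kbits n)).
    by rewrite addn0 big_enum; apply: eq_bigr => i _; exact: (proj2 (Hok i)).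
  rewrite big_split /= sum_nat_const card_ord mulnC /nedges big_distrl /=.
  done.
rewrite Hc.
have -> : INR (4 * n + nedges N * kbits n) = (INR (4 * n) + INR (nedges N) * INR (kbits n))%R
  by rewrite -mult_INR -plus_INR.
apply: Rplus_le_compat_l.
case: (posnP (nedges N)) => [->|He]; first by rewrite /= !Rmult_0_r Rmult_0_l; lra.
have Hn2 : 1 < n.
  have [i Hi] : exists i, 0 < #|pa N i|.
    case: (pickP (fun i => 0 < #|pa N i|)) => [i Hi|H]; first by exists i.
    suff E : nedges N = 0 by rewrite E in He.
    apply: big1 => i _; apply/eqP; rewrite -leqn0 leqNgt; exact/negbT/H.
  move: Hi; rewrite card_gt0 => /set0Pn [j Hj].
  have Hji : j != i by apply/eqP => E; move: (pa_irrefl N i); rewrite -{1}E Hj.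
  rewrite ltnNge; apply/negP => Hn; move/negP: Hji; apply; apply/eqP/val_inj.
  have Hi0 : (i : nat) = 0 by apply/eqP; rewrite -leqn0 -ltnS (leq_trans (ltn_ord i) Hn).
  have Hj0 : (j : nat) = 0 by apply/eqP; rewrite -leqn0 -ltnS (leq_trans (ltn_ord j) Hn).
  by rewrite /= Hi0 Hj0.
set t := trunc_log 2 n.
have Ht : expn 2 t <= n by apply: trunc_logP.
have Ht1 : 1 <= t.
  rewrite lt0n; apply/eqP => E; move: (trunc_log_ltn n (isT : 1 < 2)); rewrite -/t E expn1.
  by rewrite ltnNge Hn2.
have Hlog := log2_ge (leq_trans (isT : 0 < 1) hn) Ht.
have Ht1R : (1 <= INR t)%R by apply: (le_INR 1); apply/leP.
have -> : INR (kbits n) = (INR t + 1)%R by rewrite /kbits -/t S_INR.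
have HeR : (0 <= INR (nedges N))%R by apply: pos_INR.
nra.
Qed.
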